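(* Let $S=(\Lambda,L)$ be a quantum Hamiltonian system on $X$ and $S'=(\Lambda',L')$ a quantum Hamiltonian system on $X'$, with embeddings $\pi:\mathcal{O}(\Lambda)\to\mathcal{O}(X')$ and $\pi':\mathcal{O}(\Lambda')\to\mathcal{O}(X)$, and suppose $S$ and $S'$ are bispectrally dual via the anti-isomorphism $b:B\to B'$. Let $f\in\mathcal{O}(\Lambda)$ and $g\in\mathcal{O}(\Lambda')$, and for $i\in\mathbb{N}$ define $$A_i=\mathrm{ad}_{L_f}^i(g)\in\mathcal{D}(X),\qquad A_i'=(-1)^i\,\mathrm{ad}_f^i(L'_g)\in\mathcal{D}(X'),$$ where $\mathrm{ad}_P(Q)=PQ-QP$, $g$ stands for $\pi'(g)$ viewed as a multiplication operator on $X$, and $f$ stands for $\pi(f)$ viewed as a multiplication operator on $X'$. Then $b(A_i)=A_i'$ for all $i\in\mathbb{N}$, and in particular $A_i=0$ for all $i>\operatorname{ord} L'_g$.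
   Context: All varieties are over an algebraically closed field $\mathbb{F}$ of characteristic zero; $\mathcal{D}(X)$ denotes the ring of differential operators on $X$ and $\mathcal{O}(X)$ its coordinate ring. A quantum Hamiltonian system (QHS) on a smooth irreducible affine variety $X$ is a pair $S=(\Lambda,L)$ where $\Lambda$ is an affine variety over $\mathbb{F}$ and $L:\mathcal{O}(\Lambda)\to\mathcal{D}(X)$, $h\mapsto L_h$, is an embedding of rings. For QHSs $S=(\Lambda,L)$ on $X$ and $S'=(\Lambda',L')$ on $X'$, suppose $X'$ covers $\Lambda$ and $X$ covers $\Lambda'$, giving natural embeddings $\pi:\mathcal{O}(\Lambda)\to\mathcal{O}(X')$ and $\pi':\mathcal{O}(\Lambda')\to\mathcal{O}(X)$; functions act on varieties as multiplication operators, so $\mathcal{O}(X)\subset\mathcal{D}(X)$. Let $B\subset\mathcal{D}(X)$ be the subring generated by the images of $L$ and $\pi'$, and $B'\subset\mathcal{D}(X')$ the subring generated by the images of $L'$ and $\pi$. $S$ and $S'$ are called bispectrally dual if there is a map $b:B\to B'$ with $b(L_h)=\pi(h)$ for all $h\in\mathcal{O}(\Lambda)$, $b(\pi'(k))=L'_k$ for all $k\in\mathcal{O}(\Lambda')$, $b(P_1P_2)=b(P_2)b(P_1)$ and $b(P_1+P_2)=b(P_1)+b(P_2)$ for all $P_1,P_2\in B$, and $b(P)=0$ iff $P=0$. *)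

(* Defs.v *)
From HB Require Import structures.
From mathcomp Require Import all_boot all_order all_algebra.
Set Implicit Arguments. Unset Strict Implicit. Unset Printing Implicit Defensive.
Import GRing.Theory.
Local Open Scope ring_scope.

Definition ad {R : pzRingType} (P Q : R) : R := P * Q - Q * P.

Inductive gen_subring {R : pzRingType} (S : R -> Prop) : R -> Prop :=
| gs_base x : S x -> gen_subring S x
| gs_one : gen_subring S 1
| gs_sub x y : gen_subring S x -> gen_subring S y -> gen_subring S (x - y)
| gs_mul x y : gen_subring S x -> gen_subring S y -> gen_subring S (x * y).

Definition Bring {OL OL' : comNzRingType} {D : nzRingType}
  (L : OL -> D) (pi' : OL' -> D) : D -> Prop :=
  gen_subring (fun x => (exists h, x = L h) \/ (exists k, x = pi' k)).

Definition bispectral_dual {OL OL' : comNzRingType} {D D' : nzRingType}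
  (L : OL -> D) (pi : OL -> D') (pi' : OL' -> D) (L' : OL' -> D')
  (b : D -> D') : Prop :=
  [/\ forall P, Bring L pi' P -> Bring pi L' (b P),
      forall h, b (L h) = pi h,
      forall k, b (pi' k) = L' k,
      forall P1 P2, Bring L pi' P1 -> Bring L pi' P2 ->
        b (P1 * P2) = b P2 * b P1 /\ b (P1 + P2) = b P1 + b P2
    & forall P, Bring L pi' P -> (b P = 0 <-> P = 0)].

(* Grothendieck order filtration: P has order <= n (relative to the
   function ring O, a commutative subring of D) iff
   ad_{a_0} ... ad_{a_n} P = 0 for all a_0,...,a_n in O. *)
Definition ord_le {D : pzRingType} (O : D -> Prop) (n : nat) (P : D) : Prop :=
  forall a : seq D, size a = n.+1 -> (forall x, x \in a -> O x) ->
    foldr ad P a = 0.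

(* O is a commutative subring of D (the functions inside D(X)). *)
Definition function_subring {D : pzRingType} (O : D -> Prop) : Prop :=
  [/\ O 1, forall x y, O x -> O y -> O (x - y),
      forall x y, O x -> O y -> O (x * y)
    & forall x y, O x -> O y -> x * y = y * x].

(* Main.v *)
Require Import Defs.
From HB Require Import structures.
From mathcomp Require Import all_boot all_order all_algebra.
Import GRing.Theory.
Local Open Scope ring_scope.

Lemma foldr_nseq_ad {R : pzRingType} (y x : R) m :
  foldr ad x (nseq m y) = iter m (ad y) x.
Proof. by elim: m => //= m ->. Qed.

Lemma iter_ad0 {R : pzRingType} (y : R) m : iter m (ad y) 0 = 0.
Proof. by elim: m => //= m ->; rewrite /ad mulr0 mul0r subr0. Qed.

Lemma ad_sign {R : pzRingType} (P Q : R) k :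
  ad P ((-1) ^+ k * Q) = (-1) ^+ k * ad P Q.
Proof.
rewrite /ad mulrBr !mulrA; congr (_ * _ - _).
by rewrite (commr_sign P k).
Qed.

Theorem mainTheorem1
  (OL OL' : comNzRingType) (DX DX' : nzRingType)
  (OX : DX -> Prop) (OX' : DX' -> Prop)
  (L : {rmorphism OL -> DX}) (L' : {rmorphism OL' -> DX'})
  (pi : {rmorphism OL -> DX'}) (pi' : {rmorphism OL' -> DX})
  (b : DX -> DX')
  (hOX : function_subring OX) (hOX' : function_subring OX')
  (injL : injective L) (injL' : injective L')
  (injpi : injective pi) (injpi' : injective pi')
  (pi_in : forall h, OX' (pi h)) (pi'_in : forall k, OX (pi' k))
  (dual : bispectral_dual L pi pi' L' b)
  (f : OL) (g : OL') :
  (forall i : nat,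
     b (iter i (ad (L f)) (pi' g)) = (-1) ^+ i * iter i (ad (pi f)) (L' g)) /\
  (forall n : nat, ord_le OX' n (L' g) ->
     forall i : nat, (n < i)%N -> iter i (ad (L f)) (pi' g) = 0).
Proof.
case: dual => _ bL bpi' bM b0.
have B0 : Bring L pi' 0.
  by rewrite -(subrr 1); apply: gs_sub; apply: gs_one.
have bz : b 0 = 0.
  have [_ h] := bM 0 0 B0 B0.
  rewrite addr0 in h.
  by have := congr1 (fun x => x - b 0) h; rewrite /= subrr addrK.
have bB : forall x y, Bring L pi' x -> Bring L pi' y -> b (x - y) = b x - b y.
  move=> x y Bx By.
  have Bny : Bring L pi' (- y) by rewrite -sub0r; apply: gs_sub.
  have [_ h] := bM y (- y) By Bny.
  have [_ h2] := bM x (- y) Bx Bny.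
  rewrite subrr bz in h.
  by rewrite h2; congr (_ + _); apply/eqP; rewrite -subr_eq0 opprK addrC h.
have BA : forall i, Bring L pi' (iter i (ad (L f)) (pi' g)).
  elim=> [|i IH] /=; first by apply: gs_base; right; exists g.
  have BL : Bring L pi' (L f) by apply: gs_base; left; exists f.
  by apply: gs_sub; apply: gs_mul.
have P1 : forall i : nat,
     b (iter i (ad (L f)) (pi' g)) = (-1) ^+ i * iter i (ad (pi f)) (L' g).
  elim=> [|i IH] /=; first by rewrite expr0 mul1r bpi'.
  have BL : Bring L pi' (L f) by apply: gs_base; left; exists f.
  rewrite [ad (L f) _]/ad bB; try by apply: gs_mul => //; apply: BA.
  rewrite (bM _ _ BL (BA i)).1 (bM _ _ (BA i) BL).1 bL IH.
  rewrite exprS mulN1r mulNr -ad_sign [ad (pi f) _]/ad opprB //.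
split=> // n hn i lt_ni.
apply/(b0 _ (BA i)); rewrite P1.
rewrite -(subnKC lt_ni) addnC iterD.
have -> : iter n.+1 (ad (pi f)) (L' g) = 0.
  rewrite -foldr_nseq_ad; apply: hn; first by rewrite size_nseq.
  by move=> x /nseqP [-> _].
by rewrite iter_ad0 mulr0.
Qed.
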